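(* Let $G$ be a regular graph on $n$ vertices. Then there is an ordering of the edges of $G$ such that any $n/12$ consecutive edges in this ordering form a matching. *)

(* Defs.v *)
From HB Require Import structures.
From mathcomp Require Import all_boot.
Set Implicit Arguments. Unset Strict Implicit. Unset Printing Implicit Defensive.

Definition simple_graph (T : finType) (e : rel T) : Prop :=
  symmetric e /\ irreflexive e.

Definition nbhd (T : finType) (e : rel T) (x : T) : {set T} := [set y | e x y].
Definition regular (T : finType) (e : rel T) : Prop :=
  exists d : nat, forall x : T, #|nbhd e x| = d.

Definition edge_set (T : finType) (e : rel T) : {set {set T}} :=
  [set [set x; y] | x in T, y in [pred y | e x y]].

Definition edge_ordering (T : finType) (e : rel T) (s : seq {set T}) : Prop :=
  uniq s /\ forall A : {set T}, (A \in s) = (A \in edge_set e).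

Definition consecutive_matching (T : finType) (k : nat) (s : seq {set T}) : Prop :=
  forall i j : nat, i < j -> j < size s -> j - i + 1 <= k ->
    [disjoint nth set0 s i & nth set0 s j].

(* Main.v *)
Require Import Defs.
From HB Require Import structures.
From mathcomp Require Import all_boot zify.
Set Implicit Arguments. Unset Strict Implicit. Unset Printing Implicit Defensive.

Lemma disjP (T : finType) (A B : {set T}) :
  reflect (forall x, x \in A -> x \in B -> False) [disjoint A & B].
Proof.
rewrite -setI_eq0; apply: (iffP eqP) => [H x xA xB | H].
  have: x \in A :&: B by rewrite inE xA xB.
  by rewrite H inE.
apply/setP => x; rewrite !inE; apply/negP => /andP [] xA xB; exact: H xA xB.
Qed.

Definition matching (T : finType) (M : {set {set T}}) :=
  forall g h, g \in M -> h \in M -> g != h -> [disjoint g & h].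

Lemma matchingU1 (T : finType) (M : {set {set T}}) f :
  matching M -> (forall g, g \in M -> g != f -> [disjoint f & g]) -> matching (f |: M).
Proof.
move=> mM Hf g h /setU1P [->|gM] /setU1P [->|hM] ne.
- by rewrite eqxx in ne.
- by apply: Hf; rewrite // eq_sym.
- by rewrite disjoint_sym Hf // eq_sym.
- exact: mM.
Qed.

Lemma matchingS (T : finType) (M N : {set {set T}}) :
  N \subset M -> matching M -> matching N.
Proof. by move=> /subsetP sNM mM g h /sNM gM /sNM hM; apply: mM. Qed.

Lemma no3 (T : finType) (A B : {set {set T}}) g1 g2 g3 z :
  matching A -> matching B -> g1 \in A :|: B -> g2 \in A :|: B -> g3 \in A :|: B ->
  g1 != g2 -> g1 != g3 -> g2 != g3 -> z \in g1 -> z \in g2 -> z \in g3 -> False.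
Proof.
move=> mA mB H1 H2 H3 n12 n13 n23 z1 z2 z3.
have K: forall M u v, matching M -> u \in M -> v \in M -> u != v -> z \in u -> z \in v -> False.
  by move=> M u v mM uM vM nuv zu zv; move/disjP: (mM u v uM vM nuv) => /(_ z zu zv).
move: H1 H2 H3; rewrite !inE => /orP [] a1 /orP [] a2 /orP [] a3;
  solve [exact: (K _ _ _ mA a1 a2 n12 z1 z2) | exact: (K _ _ _ mA a1 a3 n13 z1 z3)
        | exact: (K _ _ _ mA a2 a3 n23 z2 z3) | exact: (K _ _ _ mB a1 a2 n12 z1 z2)
        | exact: (K _ _ _ mB a1 a3 n13 z1 z3) | exact: (K _ _ _ mB a2 a3 n23 z2 z3)].
Qed.

Lemma two_elts (T : finType) (f : {set T}) x :
  #|f| = 2 -> x \in f -> exists y, y != x /\ f = [set x; y].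
Proof.
move=> /eqP /cards2P [a [b [nab ->]]]; rewrite !inE => /orP [] /eqP ->.
  by exists b; split; rewrite // eq_sym.
by exists a; split => //; apply/setP => u; rewrite !inE orbC.
Qed.

Lemma disj2 (T : finType) (x y : T) (u : {set T}) :
  x \notin u -> y \notin u -> [disjoint [set x; y] & u].
Proof.
move=> xu yu; apply/disjP => v; rewrite !inE => /orP [] /eqP -> vu.
  by rewrite vu in xu. by rewrite vu in yu.
Qed.

Lemma union_back1 (T : finType) (P Q H : {set {set T}}) f :
  P :|: Q = H :\ f -> f \in H -> (f |: P) :|: Q = H.
Proof.
move=> /setP PQ fH; apply/setP => u; move: (PQ u); rewrite !inE.
by case: (eqVneq u f) => [->|uf] //= ->; rewrite fH.
Qed.

Lemma union_back2 (T : finType) (P Q H : {set {set T}}) f g :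
  P :|: Q = H :\ f :\ g -> f \in H -> g \in H -> (f |: P) :|: (g |: Q) = H.
Proof.
move=> /setP PQ fH gH; apply/setP => u; move: (PQ u); rewrite !inE.
case: (eqVneq u f) => [->|uf] /=; first by rewrite fH.
case: (eqVneq u g) => [->|ug] /=; first by rewrite gH orbT.
by move=> <-; case: (u \in P); case: (u \in Q).
Qed.

Lemma setD1C (T : finType) (H : {set T}) f g : H :\ f :\ g = H :\ g :\ f.
Proof. by apply/setP => u; rewrite !inE andbCA. Qed.

Lemma disjU1 (T : finType) (P Q : {set {set T}}) f g :
  [disjoint P & Q] -> f \notin Q -> g \notin P -> f != g -> [disjoint f |: P & g |: Q].
Proof.
move=> /disjP dPQ fQ gP fg; apply/disjP => u; rewrite !inE.
move=> /orP [/eqP ->|uP] /orP [/eqP ug|uQ].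
- by rewrite ug eqxx in fg.
- by rewrite uQ in fQ.
- by rewrite -ug uP in gP.
- exact: dPQ uP uQ.
Qed.

Definition bal_ok (T : finType) (H : {set {set T}}) :=
  exists A' B' : {set {set T}}, [/\ A' :|: B' = H, [disjoint A' & B'], matching A', matching B'
     & #|A'| <= #|B'|.+1 /\ #|B'| <= #|A'|.+1].

Definition bal_hyp (T : finType) (H : {set {set T}}) :=
  (forall g, g \in H -> #|g| = 2) /\
  exists A B : {set {set T}}, [/\ A :|: B = H, [disjoint A & B], matching A & matching B].

Lemma cover_sub (T : finType) (A B H : {set {set T}}) :
  A :|: B = H -> matching A -> (forall x, #|[set g in H | x \in g]| != 1) ->
  cover A \subset cover B.
Proof.
move=> HAB mA Hno; apply/subsetP => x /bigcupP [g gA xg].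
set S := [set g in H | x \in g].
have gS : g \in S by rewrite inE -HAB inE gA xg.
have: 0 < #|S :\ g|.
  move: (Hno x); rewrite -/S (cardsD1 g) gS; case: #|S :\ g| => //.
case/card_gt0P => h; rewrite !inE -HAB inE => /and3P [hg /orP [hA|hB] xh].
  by move/disjP: (mA h g hA gA hg) => /(_ x xh xg).
by apply/bigcupP; exists h.
Qed.

Lemma cover_card (T : finType) (A : {set {set T}}) :
  matching A -> (forall g, g \in A -> #|g| = 2) -> #|cover A| = 2 * #|A|.
Proof.
move=> mA sz.
have tA : trivIset A by apply/trivIsetP => u v uA vA; apply: mA.
move/eqP: tA => <-; rewrite (eq_bigr (fun _ => 2)); last by move=> i /sz.
by rewrite sum_nat_const mulnC.
Qed.

Lemma cardsU1n (T : finType) (a : T) (A : {set T}) : a \notin A -> #|a |: A| = #|A|.+1.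
Proof. by move=> aA; rewrite cardsU1 aA. Qed.

Lemma meetP (T : finType) (A B : {set T}) : ~~ [disjoint A & B] -> exists2 v, v \in A & v \in B.
Proof.
rewrite -setI_eq0 => /set0Pn [v]; rewrite inE => /andP [vA vB]; by exists v.
Qed.

Lemma bal_step (T : finType) (H : {set {set T}}) :
  (forall H' : {set {set T}}, #|H'| < #|H| -> bal_hyp H' -> bal_ok H') -> bal_hyp H -> bal_ok H.
Proof.
move=> IH [sz [A [B [HAB dAB mA mB]]]].
have inH : forall u, (u \in H) = (u \in A) || (u \in B) by move=> u; rewrite -HAB inE.
have Hno3 := no3 mA mB; rewrite HAB in Hno3.
case: (boolP [exists x, #|[set g in H | x \in g]| == 1]) => [/existsP [x /cards1P [f Hf]] | Hno].
- have: f \in [set g in H | x \in g] by rewrite Hf set11.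
  rewrite inE => /andP [fH xf].
  have onlyf : forall g, g \in H -> x \in g -> g = f.
    move=> g gH xg; have: g \in [set g in H | x \in g] by rewrite inE gH xg.
    by rewrite Hf inE => /eqP.
  have [y [nyx fxy]] := two_elts (sz f fH) xf.
  have yf : y \in f by rewrite fxy !inE eqxx orbT.
  case: (boolP [exists g in H, (g != f) && (y \in g)]) => [/existsP [g /and3P [gH ngf yg]] | Hg].
  +
    have [z [nzy gyz]] := two_elts (sz g gH) yg.
    have zg : z \in g by rewrite gyz !inE eqxx orbT.
    have nzx : z != x.
      by apply/eqP => ezx; move: ngf; rewrite (onlyf g gH) ?eqxx // -ezx.
    set H' := H :\ f :\ g.
    have inH' : forall u, (u \in H') = [&& u != g, u != f & u \in H] by move=> u; rewrite !inE.
    have ltH : #|H'| < #|H|.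
      rewrite /H' (cardsD1 f H) fH (cardsD1 g (H :\ f)) !inE gH ngf /=; lia.
    have hyp' : bal_hyp H'.
      split; first by move=> u; rewrite inH' => /and3P [_ _ /sz].
      exists (A :\ f :\ g), (B :\ f :\ g); split.
      * by apply/setP => u; rewrite !inE inH; case: (u == g); case: (u == f); case: (u \in A).
      * apply: disjointWl (subsetDl _ _) _; apply: disjointWr (subsetDl _ _) _.
        apply: disjointWl (subsetDl _ _) _; exact: disjointWr (subsetDl _ _) _.
      * exact: matchingS (subset_trans (subsetDl _ _) (subsetDl _ _)) mA.
      * exact: matchingS (subset_trans (subsetDl _ _) (subsetDl _ _)) mB.
    have [P [Q [PQ dPQ mP mQ [b1 b2]]]] := IH H' ltH hyp'.
    have PH' : forall u, u \in P -> u \in H' by move=> u uP; rewrite -PQ inE uP.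
    have QH' : forall u, u \in Q -> u \in H' by move=> u uQ; rewrite -PQ inE uQ orbT.
    have xnot : forall u, u \in H' -> x \notin u.
      move=> u; rewrite inH' => /and3P [_ uf uH]; apply/negP => xu.
      by move: uf; rewrite (onlyf u uH xu) eqxx.
    have ynot : forall u, u \in H' -> y \notin u.
      move=> u; rewrite inH' => /and3P [ug uf uH]; apply/negP => yu.
      apply: (Hno3 f g u y fH gH uH) => //; by rewrite eq_sym.
    have df : forall u, u \in H' -> [disjoint f & u].
      by move=> u uH'; rewrite fxy; apply: disj2; [apply: xnot | apply: ynot].
    have dg : forall u, u \in H' -> z \notin u -> [disjoint g & u].
      by move=> u uH' zu; rewrite gyz; apply: disj2 => //; apply: ynot.
    have fP : f \notin P by apply/negP => /PH'; rewrite inH' eqxx andbF.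
    have fQ : f \notin Q by apply/negP => /QH'; rewrite inH' eqxx andbF.
    have gP : g \notin P by apply/negP => /PH'; rewrite inH' eqxx.
    have gQ : g \notin Q by apply/negP => /QH'; rewrite inH' eqxx.
    have nfg : f != g by rewrite eq_sym.
    case: (boolP [exists u in P, z \in u]) => [/existsP [u /andP [uP zu]] | Hz].
    * exists (f |: P), (g |: Q); split.
      - exact: union_back2.
      - exact: disjU1.
      - apply: matchingU1 => // v vP _; exact: df (PH' v vP).
      - apply: matchingU1 => // v vQ _; apply: dg (QH' v vQ) _.
        apply/negP => zv.
        have uv : u != v by apply/eqP => euv; move/disjP: dPQ => /(_ u uP); rewrite euv => /(_ vQ).
        have := PH' u uP; rewrite inH' => /and3P [ug _ uH].
        have := QH' v vQ; rewrite inH' => /and3P [vg _ vH].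
        by apply: (Hno3 g u v z gH uH vH) => //; rewrite eq_sym.
      - by rewrite !cardsU1n //; lia.
    * exists (g |: P), (f |: Q); split.
      - by apply: union_back2 => //; rewrite -setD1C.
      - by apply: disjU1.
      - apply: matchingU1 => // v vP _; apply: dg (PH' v vP) _.
        by apply/negP => zv; move/existsP: Hz; apply; exists v; rewrite vP zv.
      - apply: matchingU1 => // v vQ _; exact: df (QH' v vQ).
      - by rewrite !cardsU1n //; lia.
  +
    set H' := H :\ f.
    have inH' : forall u, (u \in H') = (u != f) && (u \in H) by move=> u; rewrite !inE.
    have ltH : #|H'| < #|H| by rewrite /H' (cardsD1 f H) fH /=; lia.
    have hyp' : bal_hyp H'.
      split; first by move=> u; rewrite inH' => /andP [_ /sz].
      exists (A :\ f), (B :\ f); split.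
      * by apply/setP => u; rewrite !inE inH; case: (u == f); case: (u \in A).
      * apply: disjointWl (subsetDl _ _) _; exact: disjointWr (subsetDl _ _) _.
      * exact: matchingS (subsetDl _ _) mA.
      * exact: matchingS (subsetDl _ _) mB.
    have [P [Q [PQ dPQ mP mQ [b1 b2]]]] := IH H' ltH hyp'.
    have PH' : forall u, u \in P -> u \in H' by move=> u uP; rewrite -PQ inE uP.
    have QH' : forall u, u \in Q -> u \in H' by move=> u uQ; rewrite -PQ inE uQ orbT.
    have df : forall u, u \in H' -> [disjoint f & u].
      move=> u; rewrite inH' => /andP [uf uH]; rewrite fxy; apply: disj2.
        by apply/negP => xu; move: uf; rewrite (onlyf u uH xu) eqxx.
      apply/negP => yu; move/existsP: Hg; apply; exists u; by rewrite uH uf yu.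
    have fP : f \notin P by apply/negP => /PH'; rewrite inH' eqxx.
    have fQ : f \notin Q by apply/negP => /QH'; rewrite inH' eqxx.
    case: (leqP #|P| #|Q|) => hPQ.
    * exists (f |: P), Q; split.
      - exact: union_back1.
      - apply/disjP => v; rewrite !inE => /orP [/eqP ->|vP] vQ; first by rewrite vQ in fQ.
        by move/disjP: dPQ => /(_ v vP vQ).
      - apply: matchingU1 => // v vP _; exact: df (PH' v vP).
      - done.
      - by rewrite cardsU1n //; lia.
    * exists P, (f |: Q); split.
      - by rewrite setUC; apply: union_back1 => //; rewrite setUC.
      - apply/disjP => v vP; rewrite !inE => /orP [/eqP evf|vQ]; first by rewrite -evf vP in fP.
        by move/disjP: dPQ => /(_ v vP vQ).
      - done.
      - apply: matchingU1 => // v vQ _; exact: df (QH' v vQ).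
      - by rewrite cardsU1n //; lia.
-
  have Hno' : forall x, #|[set g in H | x \in g]| != 1.
    by move=> x; apply/negP => h; move/existsP: Hno; apply; exists x.
  have szA : forall g, g \in A -> #|g| = 2 by move=> g gA; apply: sz; rewrite inH gA.
  have szB : forall g, g \in B -> #|g| = 2 by move=> g gB; apply: sz; rewrite inH gB orbT.
  have cAB := cover_sub HAB mA Hno'.
  have cBA := cover_sub (etrans (setUC B A) HAB) mB Hno'.
  have e : #|A| = #|B|.
    have := cover_card mA szA; have := cover_card mB szB.
    have -> : cover A = cover B by apply/eqP; rewrite eqEsubset cAB cBA.
    move=> ->; lia.
  by exists A, B; split => //; rewrite e; lia.
Qed.

Lemma bal2 (T : finType) (H : {set {set T}}) : bal_hyp H -> bal_ok H.
Proof.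
move: {2}#|H| (leqnn #|H|) => n; elim: n H => [|n IHn] H hn.
  by apply: bal_step => H' lt; have := leq_trans lt hn.
apply: bal_step => H' lt; apply: IHn; by rewrite -ltnS (leq_trans lt hn).
Qed.

Lemma edge_setP (T : finType) (e : rel T) g :
  reflect (exists x y, e x y /\ g = [set x; y]) (g \in edge_set e).
Proof.
apply: (iffP imset2P) => [[x y _ exy ->]|[x [y [exy ->]]]].
  by exists x, y.
by exists x y.
Qed.

Lemma edge_card (T : finType) (e : rel T) g :
  simple_graph e -> g \in edge_set e -> #|g| = 2.
Proof.
move=> [_ irr] /edge_setP [x [y [exy ->]]]; rewrite cards2.
by case: (eqVneq x y) => [exy'|//]; rewrite exy' irr in exy.
Qed.

Lemma deg_edge (T : finType) (e : rel T) x :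
  simple_graph e -> #|[set g in edge_set e | x \in g]| = #|nbhd e x|.
Proof.
move=> [sym irr].
have -> : [set g in edge_set e | x \in g] = [set [set x; y] | y in nbhd e x].
  apply/setP => g; rewrite inE; apply/andP/imsetP.
    move=> [/edge_setP [a [b [eab ->]]]]; rewrite !inE => /orP [] /eqP ->.
      by exists b; rewrite // inE.
    by exists a; [rewrite inE sym | apply/setP => u; rewrite !inE orbC].
  move=> [y]; rewrite inE => exy ->; split; last by rewrite !inE eqxx.
  by apply/edge_setP; exists x, y.
apply: card_in_imset => y1 y2; rewrite !inE => e1 e2 eq.
have: y1 \in [set x; y2] by rewrite -eq !inE eqxx orbT.
rewrite !inE => /orP [] /eqP // ey1.
by rewrite ey1 irr in e1.
Qed.

Lemma handshake (T : finType) (e : rel T) :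
  simple_graph e ->
  \sum_(x : T) #|[set g in edge_set e | x \in g]| = 2 * #|edge_set e|.
Proof.
move=> sg.
transitivity (\sum_(x : T) \sum_(g in edge_set e) (x \in g : nat)).
  apply: eq_bigr => x _; rewrite -sum1_card big_mkcond /= [RHS]big_mkcond /=.
  by apply: eq_bigr => g _; rewrite inE; case: (g \in edge_set e); case: (x \in g).
rewrite exchange_big /=.
transitivity (\sum_(g in edge_set e) 2); last by rewrite sum_nat_const mulnC.
apply: eq_bigr => g gE; rewrite -(edge_card sg gE) -sum1_card [RHS]big_mkcond /=.
by apply: eq_bigr.
Qed.



Lemma greedy (T : finType) (e : rel T) (d c : nat) :
  simple_graph e -> (forall x, #|nbhd e x| = d) -> 0 < d -> 2 * d - 1 <= c ->
  forall F : {set {set T}}, F \subset edge_set e ->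
  exists col : {set T} -> 'I_c,
    forall g h, g \in F -> h \in F -> g != h -> col g = col h -> [disjoint g & h].
Proof.
move=> sg deg d0 dc F.
have c0 : 0 < c by lia.
move: {2}#|F| (leqnn #|F|) => n; elim: n F => [|n IHn] F hF sFE.
  exists (fun _ => Ordinal c0) => g h gF; move: hF.
  by rewrite (cardsD1 g) gF.
case: (set_0Vmem F) => [->|[f fF]].
  by exists (fun _ => Ordinal c0) => g h; rewrite inE.
have [col' Hcol'] : exists col : {set T} -> 'I_c,
    forall g h, g \in F :\ f -> h \in F :\ f -> g != h -> col g = col h -> [disjoint g & h].
  apply: IHn; last by apply: subset_trans (subsetDl _ _) sFE.
  by move: hF; rewrite (cardsD1 f) fF.
have fE : f \in edge_set e by apply: (subsetP sFE).
have [x [y [exy fxy]]] := edge_setP _ _ fE.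
set B := [set g in F :\ f | ~~ [disjoint g & f]].
set U := [set col' g | g in B].
have degD : forall v, v \in f -> #|[set g in edge_set e | v \in g] :\ f| = d - 1.
  move=> v vf; move: (deg_edge v sg); rewrite deg (cardsD1 f) inE fE vf /=; lia.
have xf : x \in f by rewrite fxy !inE eqxx.
have yf : y \in f by rewrite fxy !inE eqxx orbT.
have BU : B \subset ([set g in edge_set e | x \in g] :\ f) :|: ([set g in edge_set e | y \in g] :\ f).
  apply/subsetP => g; rewrite !inE => /andP [/andP [gf gF] /meetP [v vg vf]].
  rewrite (subsetP sFE g gF) gf /=; move: vf; rewrite fxy !inE.
  by case/orP => /eqP ev; subst v; rewrite vg ?orbT.
have cU : #|U| < c.
  have := leq_imset_card col' B; rewrite -/U.
  have := subset_leq_card BU; have := (leq_card_setU ([set g in edge_set e | x \in g] :\ f)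
    ([set g in edge_set e | y \in g] :\ f)).1.
  rewrite (degD x xf) (degD y yf); move=> h1 h2 h3; move: (leq_trans h2 h1) (leq_trans h3 (leq_trans h2 h1)) => h4 h5; clear -h5 d0 dc; lia.
have [i iU] : exists i, i \in ~: U.
  apply/card_gt0P; move: cU; rewrite (cardsCs U) card_ord; lia.
exists (fun g => if g == f then i else col' g) => g h gF hF2 ngh /=.
have key : forall h, h \in F -> h != f -> i = col' h -> [disjoint f & h].
  move=> h0 h0F h0f eqi; apply/negPn/negP => meet.
  move: iU; rewrite inE eqi; apply/negP/negPn; apply/imsetP; exists h0 => //.
  by rewrite !inE h0f h0F disjoint_sym.
case: (eqVneq g f) => [gf|gf]; case: (eqVneq h f) => [hf|hf].
- by rewrite gf hf eqxx in ngh.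
- by rewrite gf; apply: key.
- by move=> eq; rewrite hf disjoint_sym; apply: key => //; rewrite eq.
- by apply: Hcol'; rewrite // !inE ?gf ?hf ?gF ?hF2.
Qed.

Definition cls (T : finType) (c : nat) (E : {set {set T}}) (col : {set T} -> 'I_c) i :=
  [set g in E | col g == i].
Definition proper (T : finType) (c : nat) (E : {set {set T}}) (col : {set T} -> 'I_c) :=
  forall g h, g \in E -> h \in E -> g != h -> col g = col h -> [disjoint g & h].
Definition Phi (T : finType) (c : nat) (E : {set {set T}}) (col : {set T} -> 'I_c) :=
  \sum_(i < c) #|cls E col i| ^ 2.

Lemma sum_two (c : nat) (F G : 'I_c -> nat) i j : i != j ->
  (forall k, k != i -> k != j -> F k = G k) -> G i + G j < F i + F j ->
  \sum_k G k < \sum_k F k.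
Proof.
move=> nij hk lt.
have split2 : forall H : 'I_c -> nat,
    \sum_k H k = H i + (H j + \sum_(k | (k != i) && (k != j)) H k).
  by move=> H; rewrite (bigD1 i) //= (bigD1 j) //= eq_sym.
have eqs : \sum_(k | (k != i) && (k != j)) F k = \sum_(k | (k != i) && (k != j)) G k.
  by apply: eq_bigr => k /andP [] ki kj; apply: hk.
rewrite !split2 eqs; lia.
Qed.

Lemma bal_step_col (T : finType) (c : nat) (E : {set {set T}}) (col : {set T} -> 'I_c) :
  (forall g, g \in E -> #|g| = 2) -> proper E col ->
  (forall i j, #|cls E col i| <= #|cls E col j|.+1) \/
  exists col' : {set T} -> 'I_c, proper E col' /\ Phi E col' < Phi E col.
Proof.
move=> sz pr.
case: (boolP [forall i, forall j, #|cls E col i| <= #|cls E col j|.+1]) => [/forallP H|].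
  by left => i j; move/forallP: (H i).
move/forallPn => [i /forallPn [j]]; rewrite -ltnNge => hij; right.
have nij : i != j by apply/eqP => eij; move: hij; rewrite eij; lia.
set A := cls E col i; set B := cls E col j.
have inA : forall g, (g \in A) = (g \in E) && (col g == i) by move=> g; rewrite inE.
have inB : forall g, (g \in B) = (g \in E) && (col g == j) by move=> g; rewrite inE.
have mcls : forall k, matching (cls E col k).
  move=> k g h; rewrite !inE => /andP [gE /eqP gk] /andP [hE /eqP hk] gh.
  by apply: pr; rewrite // gk hk.
have dAB : [disjoint A & B].
  apply/disjP => g; rewrite inA inB => /andP [_ /eqP ->] /andP [_ /eqP eij].
  by rewrite eij eqxx in nij.
have hyp : bal_hyp (A :|: B).
  split; last by exists A, B; split => //; apply: mcls.
  by move=> g; rewrite inE inA inB => /orP [] /andP [/sz].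
have [P [Q [PQ dPQ mP mQ [b1 b2]]]] := bal2 hyp.
have inPQ : forall g, (g \in P) || (g \in Q) = (g \in E) && ((col g == i) || (col g == j)).
  move=> g; rewrite -in_setU PQ inE inA inB.
  by case: (g \in E); case: (col g == i).
have nPQ : forall g, g \in P -> g \in Q -> False by move/disjP: dPQ.
pose col' g := if g \in P then i else if g \in Q then j else col g.
have c'P : cls E col' i = P.
  apply/setP => g; rewrite !inE /col'.
  case gP: (g \in P); first by move: (inPQ g); rewrite gP eqxx /= => /esym /andP [-> _].
  case gQ: (g \in Q); first by rewrite eq_sym (negbTE nij) andbF.
  by move: (inPQ g); rewrite gP gQ /=; case: (g \in E); case: (col g == i).
have c'Q : cls E col' j = Q.
  apply/setP => g; rewrite !inE /col'.
  case gP: (g \in P); first by rewrite (negbTE nij) andbF; case gQ: (g \in Q) => //; exfalso; apply: (nPQ g).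
  case gQ: (g \in Q); first by move: (inPQ g); rewrite gQ eqxx orbT /= => /esym /andP [-> _].
  by move: (inPQ g); rewrite gP gQ /=; case: (g \in E); case: (col g == j); rewrite ?orbT.
have c'k : forall k, k != i -> k != j -> cls E col' k = cls E col k.
  move=> k ki kj; apply/setP => g; rewrite !inE /col'.
  case gP: (g \in P).
    move: (inPQ g); rewrite gP /= => /esym /andP [-> /orP [] /eqP ->].
    by rewrite eq_sym (negbTE ki). by rewrite eq_sym (negbTE ki) eq_sym (negbTE kj).
  case gQ: (g \in Q).
    move: (inPQ g); rewrite gQ orbT /= => /esym /andP [-> /orP [] /eqP ->].
    by rewrite eq_sym (negbTE kj) eq_sym (negbTE ki). by rewrite eq_sym (negbTE kj).
  by [].
exists col'; split.
  move=> g h gE hE gh eq.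
  have gk : g \in cls E col' (col' g) by rewrite inE gE eqxx.
  have hk : h \in cls E col' (col' g) by rewrite inE hE eq eqxx.
  case: (eqVneq (col' g) i) => [ei|ni].
    by move: gk hk; rewrite ei c'P => gP hP; apply: mP.
  case: (eqVneq (col' g) j) => [ej|nj].
    by move: gk hk; rewrite ej c'Q => gQ hQ; apply: mQ.
  move: gk hk; rewrite c'k // => gk hk.
  by apply: (mcls (col' g)).
rewrite /Phi; apply: (sum_two nij).
  by move=> k ki kj; rewrite c'k.
rewrite c'P c'Q.
have : #|P| + #|Q| = #|A| + #|B|.
  rewrite -(cardsUI P Q) -(cardsUI A B) PQ (disjoint_setI0 dPQ) (disjoint_setI0 dAB).
  by rewrite !cards0.
rewrite -/A -/B in hij *.
move=> hs; nia.
Qed.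

Lemma balance (T : finType) (c : nat) (E : {set {set T}}) (col : {set T} -> 'I_c) :
  (forall g, g \in E -> #|g| = 2) -> proper E col ->
  exists col' : {set T} -> 'I_c, proper E col' /\ forall i j, #|cls E col' i| <= #|cls E col' j|.+1.
Proof.
move=> sz; move: {2}(Phi E col) (leqnn (Phi E col)) => n; elim: n col => [|n IHn] col hn pr.
  case: (bal_step_col sz pr) => [H|[col' [pr' lt]]]; first by exists col.
  by move: lt; rewrite ltnNge (leq_trans hn).
case: (bal_step_col sz pr) => [H|[col' [pr' lt]]]; first by exists col.
by apply: (IHn col') => //; rewrite -ltnS (leq_trans lt hn).
Qed.

Lemma mem_nth_drop (T : eqType) (x0 : T) (s : seq T) n i :
  n <= i -> i < size s -> nth x0 s i \in drop n s.
Proof.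
move=> ni iS; have -> : nth x0 s i = nth x0 (drop n s) (i - n).
  by rewrite nth_drop subnKC.
by apply: mem_nth; rewrite size_drop; lia.
Qed.

Lemma mem_nth_take (T : eqType) (x0 : T) (s : seq T) n i :
  i < n -> i < size s -> nth x0 s i \in take n s.
Proof.
move=> ni iS; rewrite -(nth_take x0 ni); apply: mem_nth; rewrite size_take.
by case: ifP.
Qed.

Lemma app_cm (T : finType) k (L s : seq {set T}) (M : {set {set T}}) :
  consecutive_matching k s -> uniq L -> matching M -> (forall g, g \in L -> g \in M) ->
  (forall a b, a \in drop (size L - (k - 1)) L -> b \in take (k - 1) s -> [disjoint a & b]) ->
  consecutive_matching k (L ++ s).
Proof.
move=> cs uL mM LM hd i j ij; rewrite size_cat => js w; rewrite !nth_cat.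
case: (ltnP j (size L)) => hj.
  have hi : i < size L by lia.
  rewrite hi; apply: mM; try by apply: LM; apply: mem_nth.
  by rewrite nth_uniq //; apply/eqP => eij; rewrite eij ltnn in ij.
case: (ltnP i (size L)) => hi.
  apply: hd; first by apply: mem_nth_drop => //; lia.
  apply: mem_nth_take; first lia.
  by have : j - size L < size s by lia.

apply: cs; try lia; by have : j - size L < size s by lia.
Qed.

Lemma meet_le2 (T : finType) (M : {set {set T}}) (h : {set T}) :
  matching M -> #|h| = 2 -> #|[set g in M | ~~ [disjoint g & h]]| <= 2.
Proof.
move=> mM /eqP /cards2P [a [b [nab ->]]].
have le1 : forall v, #|[set g in M | v \in g]| <= 1.
  move=> v; apply/card_le1_eqP => g1 g2; rewrite !inE => /andP [g1M vg1] /andP [g2M vg2].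
  apply/eqP/negPn/negP; rewrite eq_sym => ne.
  by move/disjP: (mM _ _ g1M g2M ne) => /(_ v vg1 vg2).
have sub : [set g in M | ~~ [disjoint g & [set a; b]]] \subset
           [set g in M | a \in g] :|: [set g in M | b \in g].
  apply/subsetP => g; rewrite !inE => /andP [gM /meetP [v vg]].
  by rewrite !inE => /orP [] /eqP ev; subst v; rewrite gM vg ?orbT.
apply: leq_trans (subset_leq_card sub) _.
apply: leq_trans (leq_card_setU _ _).1 _.
by have := le1 a; have := le1 b; lia.
Qed.

Lemma bad_le (T : finType) (M : {set {set T}}) (hs : seq {set T}) :
  matching M -> (forall h, h \in hs -> #|h| = 2) ->
  #|[set g in M | has (fun h : {set T} => ~~ [disjoint g & h]) hs]| <= 2 * size hs.
Proof.
move=> mM; elim: hs => [|h hs IH] hsz.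
  by rewrite (eq_card0) // => g; rewrite !inE andbF.
have sub : [set g in M | has (fun h : {set T} => ~~ [disjoint g & h]) (h :: hs)] \subset
   [set g in M | ~~ [disjoint g & h]] :|: [set g in M | has (fun h : {set T} => ~~ [disjoint g & h]) hs].
  apply/subsetP => g; rewrite !inE /= => /andP [gM /orP [H|H]]; by rewrite gM H ?orbT.
apply: leq_trans (subset_leq_card sub) _.
apply: leq_trans (leq_card_setU _ _).1 _.
have := meet_le2 mM (hsz h (mem_head _ _)).
have := IH (fun h0 h0s => hsz h0 (@mem_behead _ (h :: hs) _ h0s)).
rewrite /=; lia.
Qed.

Lemma build (T : finType) k (ms : seq {set {set T}}) :
  (forall M, M \in ms -> [/\ matching M, 3 * (k - 1) <= #|M| & forall g, g \in M -> #|g| = 2]) ->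
  pairwise (fun M N : {set {set T}} => [disjoint M & N]) ms ->
  exists s : seq {set T}, [/\ consecutive_matching k s, uniq s &
     forall A, (A \in s) = has (fun M : {set {set T}} => A \in M) ms].
Proof.
elim: ms => [|M ms IH] hM pw.
  by exists [::]; split => // i j _.
have [mM szM sz2] := hM M (mem_head _ _).
move: pw; rewrite pairwise_cons => /andP [/allP dM pw].
have [s [cs us ms_mem]] := IH (fun N Nms => hM N (@mem_behead _ (M :: ms) _ Nms)) pw.
set hd := take (k - 1) s.
pose bad (g : {set T}) := has (fun h : {set T} => ~~ [disjoint g & h]) hd.
set B := [seq g <- enum M | bad g].
set G := [seq g <- enum M | predC bad g].
set L := B ++ G.
have pL : perm_eq L (enum M) by apply/permPl; apply: perm_filterC.
have uL : uniq L by rewrite (perm_uniq pL) enum_uniq.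
have memL : forall g, (g \in L) = (g \in M) by move=> g; rewrite (perm_mem pL) mem_enum.
have hdsz : forall h, h \in hd -> #|h| = 2.
  move=> h /mem_take; rewrite ms_mem => /hasP [N Nms hN].
  by have [_ _ ->] := hM N (@mem_behead _ (M :: ms) _ Nms).
have szhd : size hd <= k - 1 by rewrite size_take; case: ifP; lia.
have szB : size B <= 2 * (k - 1).
  have uB : uniq B by apply: filter_uniq; apply: enum_uniq.
  move/card_uniqP: uB => <-.
  apply: leq_trans (leq_trans _ (bad_le mM hdsz)) _; last by lia.
  apply: subset_leq_card; apply/subsetP => g; rewrite mem_filter mem_enum inE.
  by move=> /andP [bg gM]; rewrite gM.
have szBG : size B + size G = #|M|.
  by rewrite !size_filter count_predC cardE.
have szG : k - 1 <= size G by lia.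
exists (L ++ s); split.
- apply: app_cm cs uL mM _ _; first by move=> g; rewrite memL.
  move=> a b; rewrite /L size_cat drop_cat.
  have -> : (size B + size G - (k - 1) < size B) = false by apply/negbTE; lia.
  move=> /mem_drop; rewrite mem_filter /= => /andP [nbad _] bhd.
  move/hasPn: nbad => /(_ b bhd); by rewrite negbK.
- rewrite cat_uniq uL us andbT; apply/hasPn => x xs; apply/negP; rewrite memL => xM.
  move: xs; rewrite ms_mem => /hasP [N Nms xN].
  by move/disjP: (dM N Nms) => /(_ x xM xN).
- by move=> A; rewrite mem_cat memL ms_mem.
Qed.

Lemma pairwise_uniq (X : eqType) (r : X -> X -> bool) (s : seq X) :
  uniq s -> (forall x y, x != y -> r x y) -> pairwise r s.
Proof.
move=> us hr; elim: s us => [|x s IH] //= /andP [xs us].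
rewrite IH // andbT; apply/allP => y ys; apply: hr.
by apply/eqP => exy; rewrite exy ys in xs.
Qed.

Unset Implicit Arguments.

Theorem fact4p16 (T : finType) (e : rel T) :
  simple_graph e -> regular e ->
  exists s : seq {set T},
    edge_ordering e s /\ consecutive_matching (#|T| %/ 12) s.
Proof.
move=> sg [d deg].
set E := edge_set e; set k := #|T| %/ 12.
case: (leqP k 1) => hk.
  exists (enum E); split; first by split; [apply: enum_uniq | move=> A; rewrite mem_enum].
  move=> i j ij _ w; exfalso; lia.
have sz : forall g, g \in E -> #|g| = 2 by move=> g; apply: edge_card.
case: (posnP d) => [d0 | dpos].
  have E0 : forall g, g \in E = false.
    move=> g; apply/negP => /edge_setP [x [y [exy _]]].
    by move: (deg x); rewrite d0 => /eqP; rewrite cards_eq0 => /eqP /setP /(_ y); rewrite !inE exy.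
  exists [::]; split; first by split => // A; rewrite E0.
  by move=> i j.
set c := 2 * d - 1.
have [col0 pr0] := greedy sg deg dpos (leqnn c) (subxx E).
have [col [pr bal]] := balance sz pr0.
set ms := [seq cls E col i | i <- enum 'I_c].
have sumcls : \sum_(i < c) #|cls E col i| = #|E|.
  rewrite -sum1_card (partition_big col predT) //=.
  apply: eq_bigr => i _; rewrite -sum1_card; apply: eq_bigl => g; by rewrite inE.
have hs : \sum_(x : T) #|[set g in E | x \in g]| = #|T| * d.
  rewrite (eq_bigr (fun _ => d)); last by move=> x _; rewrite deg_edge // deg.
  by rewrite sum_nat_const.
have hE : 2 * #|E| = #|T| * d by rewrite -handshake.
have n12 : 12 * k <= #|T| by rewrite /k mulnC leq_divM.
have big : forall i, 3 * (k - 1) <= #|cls E col i|.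
  move=> i; rewrite leqNgt; apply/negP => lt.
  have : \sum_(j < c) #|cls E col j| <= \sum_(j < c) (3 * (k - 1)).
    by apply: leq_sum => j _; have := bal j i; lia.
  rewrite sumcls sum_nat_const card_ord => hle.
  have : 2 * #|E| <= 2 * (c * (3 * (k - 1))) by lia.
  rewrite hE /c => hh.
  have : #|T| * d <= (2 * d - 1) * (6 * k - 6) by lia.
  have : 12 * k * d <= #|T| * d by apply: leq_mul.
  move=> h1 h2; nia.
have hyp : forall M, M \in ms -> [/\ matching M, 3 * (k - 1) <= #|M| & forall g, g \in M -> #|g| = 2].
  move=> M /mapP [i _ ->]; split => //.
  - move=> g h; rewrite !inE => /andP [gE /eqP gi] /andP [hE' /eqP hi] gh.
    by apply: pr; rewrite // gi hi.
  - by move=> g; rewrite inE => /andP [/sz].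
have pw : pairwise (fun M N : {set {set T}} => [disjoint M & N]) ms.
  rewrite pairwise_map; apply: pairwise_uniq; first exact: enum_uniq.
  move=> i j nij; apply/disjP => g; rewrite !inE => /andP [_ /eqP ->] /andP [_ /eqP eij].
  by rewrite eij eqxx in nij.
have [s [cs us smem]] := build hyp pw.
exists s; split => //; split => // A.
rewrite smem has_map; apply/hasP/idP => [[i _]|AE].
  by rewrite /preim /= inE => /andP [].
by exists (col A); rewrite ?mem_enum //= /preim /= inE AE eqxx.
Qed.
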